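(* Let $d\geq 2$ and $n_1,\dots,n_d\geq 1$ be integers and let $G_1,G_2$ be graphs. Then $K_{n_1,\dots,n_d}$ is isomorphic to a subgraph of $G_1\boxtimes G_2$ if and only if there exist non-negative integers $a_1,\dots,a_d,b_1,\dots,b_d,z_1,\dots,z_d,x,y$ such that: (i) $K_{a_1,\dots,a_d,\overline{x}}$ is isomorphic to a subgraph of $G_1$; (ii) $K_{b_1,\dots,b_d,\overline{y}}$ is isomorphic to a subgraph of $G_2$; (iii) $n_j \leq a_jb_j+a_jy+b_jx+z_j$ for all $j\in\{1,\dots,d\}$; and (iv) $z_1+\dots+z_d\leq xy$.
   Context: The strong product $G_1 \boxtimes G_2$ has vertex set $V(G_1)\times V(G_2)$, with distinct vertices $(a,v),(b,u)$ adjacent iff ($a=b$ or $ab\in E(G_1)$) and ($u=v$ or $uv\in E(G_2)$). For non-negative integers $a_1,\dots,a_d,x$, the graph $K_{a_1,\dots,a_d,\overline{x}}$ has vertex set $A_1\cup\dots\cup A_d\cup X$, a disjoint union with $|A_j|=a_j$ and $|X|=x$, in which two distinct vertices are adjacent iff they lie in different sets among $A_1,\dots,A_d,X$ or both lie in $X$ (so $X$ is a clique, each $A_j$ is independent, and parts may be empty). $K_{n_1,\dots,n_d}$ denotes the complete $d$-partite graph with parts of sizes $n_1,\dots,n_d$. *)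

(* Defs.v *)
From mathcomp Require Import all_boot.
Set Implicit Arguments. Unset Strict Implicit. Unset Printing Implicit Defensive.

Definition simple_graph (T : finType) (e : rel T) : Prop :=
  symmetric e /\ irreflexive e.

Definition subgraph_iso (S : finType) (f : rel S) (T : finType) (e : rel T) : Prop :=
  exists h : S -> T, injective h /\ forall u v, f u v -> e (h u) (h v).

Definition strong_prod (T1 T2 : finType) (e1 : rel T1) (e2 : rel T2) : rel (T1 * T2) :=
  fun p q => [&& p != q, (p.1 == q.1) || e1 p.1 q.1 & (p.2 == q.2) || e2 p.2 q.2].

Definition parts_vtx (d : nat) (a : 'I_d -> nat) : finType := {j : 'I_d & 'I_(a j)}.

Definition Kmp_adj (d : nat) (n : 'I_d -> nat) : rel (parts_vtx n) :=
  fun u v => tag u != tag v.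

(* K_{a_1,...,a_d, xbar}: parts A_1..A_d (independent) plus a clique X of size x,
   adjacent to everything else. *)
Definition Kmpx_vtx (d : nat) (a : 'I_d -> nat) (x : nat) : finType :=
  (parts_vtx a + 'I_x)%type.

Definition Kmpx_adj (d : nat) (a : 'I_d -> nat) (x : nat) : rel (Kmpx_vtx a x) :=
  fun u v => match u, v with
  | inl u', inl v' => tag u' != tag v'
  | inr i, inr i' => i != i'
  | _, _ => true
  end.

(* Main.v *)
Require Import Defs.
From mathcomp Require Import all_boot.
Set Implicit Arguments. Unset Strict Implicit. Unset Printing Implicit Defensive.

Definition inj_of (S U : finType) (H : #|S| <= #|U|) (s : S) : U :=
  enum_val (widen_ord H (enum_rank s)).
Lemma inj_of_inj S U H : injective (@inj_of S U H).
Proof.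
move=> s t /enum_val_inj /(congr1 val) /= E.
by apply: enum_rank_inj; apply: val_inj.
Qed.

Definition colx d (a : 'I_d -> nat) x (w : Kmpx_vtx a x) : option 'I_d :=
  match w with inl u => Some (tag u) | inr _ => None end.

Lemma colx_adj d (a : 'I_d -> nat) x (u v : Kmpx_vtx a x) :
  (forall c, colx u = Some c -> colx v = Some c -> False) ->
  (u == v) || Kmpx_adj u v.
Proof.
case: u => [u|i]; case: v => [v|i0] H; rewrite /Kmpx_adj /=.
- apply/orP; right; apply/eqP => E; by apply: (H (tag u)) => //=; rewrite E.
- by [].
- by [].
- by case: (i =P i0) => [->|/eqP]; rewrite ?eqxx ?orbT.
Qed.

Lemma card_sig_sum d (z : 'I_d -> nat) : #|{: {j : 'I_d & 'I_(z j)}}| = \sum_j z j.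
Proof.
rewrite (card_tagged (fun j => 'I_(z j))) sumnE big_map big_enum /=.
by apply: eq_bigr => j _; rewrite card_ord.
Qed.

Section Build.
Variables (d : nat) (n a b z : 'I_d -> nat) (x y : nat).
Variables (T1 T2 : finType) (e1 : rel T1) (e2 : rel T2).
Variables (hA : Kmpx_vtx a x -> T1) (hB : Kmpx_vtx b y -> T2).
Hypotheses (hAi : injective hA) (hAe : forall u v, Kmpx_adj u v -> e1 (hA u) (hA v)).
Hypotheses (hBi : injective hB) (hBe : forall u v, Kmpx_adj u v -> e2 (hB u) (hB v)).
Hypothesis Hn : forall j, n j <= a j * b j + a j * y + b j * x + z j.
Hypothesis Hz : \sum_(j < d) z j <= x * y.

Definition ZT : finType := {j : 'I_d & 'I_(z j)}.
Lemma ZT_card : #|ZT| <= #|{: 'I_x * 'I_y}|.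
Proof. by rewrite card_sig_sum card_prod !card_ord. Qed.
Definition g : ZT -> 'I_x * 'I_y := inj_of ZT_card.

Definition Slot (j : 'I_d) : finType :=
  ('I_(a j) * 'I_(b j) + 'I_(a j) * 'I_y + 'I_x * 'I_(b j) + 'I_(z j))%type.

Lemma Slot_card j : #|{: 'I_(n j)}| <= #|Slot j|.
Proof.
rewrite /Slot !card_sum !card_prod !card_ord.
by rewrite (mulnC x); apply: Hn.
Qed.

Definition sig j : 'I_(n j) -> Slot j := inj_of (Slot_card j).

Definition Phi (j : 'I_d) (s : Slot j) : Kmpx_vtx a x * Kmpx_vtx b y :=
  match s with
  | inl (inl (inl (s1, t1))) =>
      (inl (Tagged (fun j => 'I_(a j)) s1), inl (Tagged (fun j => 'I_(b j)) t1))
  | inl (inl (inr (s1, t1))) => (inl (Tagged (fun j => 'I_(a j)) s1), inr t1)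
  | inl (inr (s1, t1)) => (inr s1, inl (Tagged (fun j => 'I_(b j)) t1))
  | inr i => let p := g (Tagged (fun j => 'I_(z j)) i) in (inr p.1, inr p.2)
  end.

Lemma Phi_inj j k (s : Slot j) (t : Slot k) :
  Phi s = Phi t -> Tagged Slot s = Tagged Slot t.
Proof.
case: s => [[[[s1 t1]|[s1 t1]]|[s1 t1]]|i];
case: t => [[[[s2 t2]|[s2 t2]]|[s2 t2]]|i2] //=.
- case=> jk; subst k => E1 _ E2; have ? := eq_from_Tagged E1; have ? := eq_from_Tagged E2; by subst.
- case=> jk; subst k => E1 ->; have ? := eq_from_Tagged E1; by subst.
- case=> -> jk; subst k => E1; have ? := eq_from_Tagged E1; by subst.
- case=> E1 E2.
  have /inj_of_inj /[dup] /(congr1 tag) /= jk : g (Tagged (fun j => 'I_(z j)) i) = g (Tagged (fun j => 'I_(z j)) i2).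
    by move: (g _) (g _) E1 E2 => [? ?] [? ?] /= -> ->.
  by subst k => E; have ? := eq_from_Tagged E; subst.
Qed.

Lemma Phi1_col j (s : Slot j) c : colx (Phi s).1 = Some c -> c = j.
Proof. by case: s => [[[[s1 t1]|[s1 t1]]|[s1 t1]]|i] //= [<-]. Qed.
Lemma Phi2_col j (s : Slot j) c : colx (Phi s).2 = Some c -> c = j.
Proof. by case: s => [[[[s1 t1]|[s1 t1]]|[s1 t1]]|i] //= [<-]. Qed.

Definition hK (u : parts_vtx n) : T1 * T2 :=
  let p := Phi (sig (tagged u)) in (hA p.1, hB p.2).

Lemma hK_inj : injective hK.
Proof.
move=> [j i] [k i'] /=; rewrite /hK /= => -[/hAi E1 /hBi E2].
have /Phi_inj /[dup] /(congr1 tag) /= jk : Phi (sig i) = Phi (sig i').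
  by move: (Phi _) (Phi _) E1 E2 => [? ?] [? ?] /= -> ->.
subst k => E; have := eq_from_Tagged E => /inj_of_inj ?; by subst.
Qed.

Lemma hK_adj u v : Kmp_adj u v -> strong_prod e1 e2 (hK u) (hK v).
Proof.
move=> uv; rewrite /strong_prod.
have -> : hK u != hK v.
  apply/negP => /eqP /hK_inj E; move: uv; by rewrite /Kmp_adj E eqxx.
move: uv; case: u => [j i]; case: v => [k i'] /=; rewrite /Kmp_adj /= => jk.
rewrite /hK /=.
have H1 : ((Phi (sig i)).1 == (Phi (sig i')).1) || Kmpx_adj (Phi (sig i)).1 (Phi (sig i')).1.
  apply: colx_adj => c /Phi1_col -> /Phi1_col E; by rewrite E eqxx in jk.
have H2 : ((Phi (sig i)).2 == (Phi (sig i')).2) || Kmpx_adj (Phi (sig i)).2 (Phi (sig i')).2.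
  apply: colx_adj => c /Phi2_col -> /Phi2_col E; by rewrite E eqxx in jk.
apply/andP; split.
  by case/orP: H1 => [/eqP ->|/hAe ->]; rewrite ?eqxx ?orbT.
by case/orP: H2 => [/eqP ->|/hBe ->]; rewrite ?eqxx ?orbT.
Qed.

End Build.
Section Proj.
Variables (d : nat) (n : 'I_d -> nat) (T : finType) (e : rel T) (pi : parts_vtx n -> T).
Hypothesis Hpi : forall p q, tag p != tag q -> (pi p == pi q) || e (pi p) (pi q).

Definition P (j : 'I_d) : {set T} := pi @: [set u : parts_vtx n | tag u == j].
Definition X : {set T} :=
  [set v | [exists j, exists k, [&& j != k, v \in P j & v \in P k]]].
Definition A j : {set T} := P j :\: X.
Definition aa j := #|A j|.

Lemma P_adj j k v w : j != k -> v \in P j -> w \in P k -> v != w -> e v w.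
Proof.
move=> jk /imsetP[p]; rewrite inE => /eqP pj ->.
move=> /imsetP[q]; rewrite inE => /eqP qk ->.
move=> ne; have := @Hpi p q; rewrite pj qk jk => /(_ isT).
by rewrite (negbTE ne).
Qed.

Lemma inX j k v : j != k -> v \in P j -> v \in P k -> v \in X.
Proof.
move=> jk vj vk; rewrite inE; apply/existsP; exists j; apply/existsP; exists k.
by rewrite jk vj vk.
Qed.

Lemma XP v : v \in X -> exists j k, [/\ j != k, v \in P j & v \in P k].
Proof.
rewrite inE => /existsP[j /existsP[k /and3P[jk vj vk]]]; by exists j, k.
Qed.

Lemma X_adj_P v w l : v \in X -> w \in P l -> v != w -> e v w.
Proof.
move=> /XP [j [k [jk vj vk]]] wl ne.
case: (eqVneq j l) => [jl|jl]; last exact: (P_adj jl).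
subst l; rewrite eq_sym in jk; exact: (P_adj jk vk wl ne).
Qed.

Lemma P_adj_X v w l : v \in P l -> w \in X -> v != w -> e v w.
Proof.
move=> vl /XP[j [k [jk wj wk]]] ne.
case: (eqVneq l j) => [lj|lj]; last exact: (P_adj lj).
subst l; exact: (P_adj jk vl wk ne).
Qed.

Lemma XinP v : v \in X -> exists l, v \in P l.
Proof. by case/XP=> j [k [_ vj _]]; exists j. Qed.

Lemma AP j v : v \in A j -> v \in P j /\ v \notin X.
Proof. by rewrite inE => /andP[]. Qed.

Definition hA (w : Kmpx_vtx aa #|X|) : T :=
  match w with
  | inl u => @enum_val T (A (tag u)) (tagged u)
  | inr i => @enum_val T X i
  end.

Lemma hA_inl j (s : 'I_(aa j)) : hA (inl (Tagged (fun j => 'I_(aa j)) s)) \in A j.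
Proof. exact: enum_valP. Qed.
Lemma hA_inr i : hA (inr i) \in X.
Proof. exact: enum_valP. Qed.

Lemma hA_inj : injective hA.
Proof.
move=> [[j s]|i] [[k t]|i'].
- move=> E.
  have /AP [Pj nX] := hA_inl s; have /AP [Pk _] := hA_inl t.
  case: (eqVneq j k) => [jk|jk].
  + subst k; move: E => /= /enum_val_inj ?; by subst.
  + by rewrite (inX jk Pj) // E in nX.
- move=> E; have /AP [_ nX] := hA_inl s; have := hA_inr i'.
  by rewrite -E (negbTE nX).
- move=> E; have /AP [_ nX] := hA_inl t; have := hA_inr i.
  by rewrite E (negbTE nX).
- by move=> /= /enum_val_inj ->.
Qed.

Lemma Kmpx_neq (a : 'I_d -> nat) x (u v : Kmpx_vtx a x) : Kmpx_adj u v -> u != v.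
Proof.
case: u => [u|i]; case: v => [v|i0] //=; rewrite /Kmpx_adj; try by apply: contra => /eqP [->].
Qed.

Lemma hA_adj u v : Kmpx_adj u v -> e (hA u) (hA v).
Proof.
move=> /[dup] /Kmpx_neq uv.
have ne : hA u != hA v by apply: contra uv => /eqP /hA_inj ->.
move: ne uv.
case: u => [[j s]|i]; case: v => [[k t]|i'] ne _ adj.
- have /AP [Pj _] := hA_inl s; have /AP [Pk _] := hA_inl t.
  exact: (P_adj adj).
- have /AP [Pj _] := hA_inl s; exact: (P_adj_X Pj (hA_inr i') ne).
- have /AP [Pk _] := hA_inl t; exact: (X_adj_P (hA_inr i) Pk ne).
- have /XinP [l Pl] := hA_inr i'; exact: (X_adj_P (hA_inr i) Pl ne).
Qed.

Lemma sub_Kmpx : subgraph_iso (Kmpx_adj (a:=aa) (x:=#|X|)) e.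
Proof. exists hA; split; [exact: hA_inj | exact: hA_adj]. Qed.

Lemma pi_cover u : pi u \in A (tag u) \/ pi u \in X.
Proof.
have Pu : pi u \in P (tag u) by apply: imset_f; rewrite inE.
case: (boolP (pi u \in X)) => [|nX]; [by right | left; by rewrite inE nX].
Qed.

End Proj.


Lemma cardU_le (T : finType) (B C : {set T}) : #|B :|: C| <= #|B| + #|C|.
Proof. exact: (leq_card_setU B C).1. Qed.

Section Count.
Variables (d : nat) (n : 'I_d -> nat) (T1 T2 : finType) (h : parts_vtx n -> T1 * T2).
Hypothesis hi : injective h.

Lemma card_pre (Q : pred (parts_vtx n)) (S : {set T1 * T2}) :
  #|[set u | Q u & h u \in S]| <= #|S|.
Proof.
rewrite -(card_imset [set u | Q u & h u \in S] hi); apply: subset_leq_card; apply/subsetP => v /imsetP[u Hu ->].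
by move: Hu; rewrite inE => /andP[_ ?].
Qed.

Lemma sum_part (Q : pred (parts_vtx n)) :
  \sum_(j < d) #|[set u | (tag u == j) && Q u]| = #|[set u | Q u]|.
Proof.
rewrite -sum1_card (partition_big (fun u : parts_vtx n => tag u) predT) //=.
apply: eq_bigr => j _; rewrite -sum1_card; apply: eq_bigl => u; by rewrite !inE andbC.
Qed.

Lemma n_le j : n j <= #|[set u : parts_vtx n | tag u == j]|.
Proof.
have tinj : injective (fun i : 'I_(n j) => (Tagged (fun j => 'I_(n j)) i : parts_vtx n)).
  by move=> i i' E; exact: eq_from_Tagged E.
rewrite -{1}[n j]card_ord -cardsT -(card_imset _ tinj); apply: subset_leq_card.
by apply/subsetP => v /imsetP[i _ ->]; rewrite inE.
Qed.
End Count.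

Theorem mainTheorem3 (d : nat) (n : 'I_d -> nat)
    (T1 : finType) (e1 : rel T1) (T2 : finType) (e2 : rel T2) :
  2 <= d -> (forall j, 1 <= n j) ->
  simple_graph e1 -> simple_graph e2 ->
  subgraph_iso (@Kmp_adj d n) (strong_prod e1 e2) <->
  exists (a b z : 'I_d -> nat) (x y : nat),
    [/\ subgraph_iso (@Kmpx_adj d a x) e1,
        subgraph_iso (@Kmpx_adj d b y) e2,
        (forall j, n j <= a j * b j + a j * y + b j * x + z j) &
        \sum_(j < d) z j <= x * y].
Proof.
move=> _ _ _ _; split.
- move=> [h [hi hadj]].
  pose pi1 := fun u => (h u).1. pose pi2 := fun u => (h u).2.
  have Hp1 : forall p q, tag p != tag q -> (pi1 p == pi1 q) || e1 (pi1 p) (pi1 q).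
    by move=> p q pq; have /and3P[_ ? _] := hadj p q pq.
  have Hp2 : forall p q, tag p != tag q -> (pi2 p == pi2 q) || e2 (pi2 p) (pi2 q).
    by move=> p q pq; have /and3P[_ _ ?] := hadj p q pq.
  pose S4 := setX (X pi1) (X pi2).
  exists (aa pi1), (aa pi2), (fun j => #|[set u | (tag u == j) && (h u \in S4)]|),
    #|X pi1|, #|X pi2|.
  split.
  + exact: sub_Kmpx Hp1.
  + exact: sub_Kmpx Hp2.
  + move=> j.
    pose S1 := setX (A pi1 j) (A pi2 j). pose S2 := setX (A pi1 j) (X pi2).
    pose S3 := setX (X pi1) (A pi2 j).
    pose W (S : {set T1 * T2}) := [set u | (tag u == j) && (h u \in S)].
    have sub : [set u : parts_vtx n | tag u == j] \subset W S1 :|: W S2 :|: W S3 :|: W S4.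
      apply/subsetP => u; rewrite inE => /eqP uj.
      have E : h u = (pi1 u, pi2 u) by rewrite /pi1 /pi2; case: (h u).
      have Wm : forall S v, (v \in W S) = (tag v == j) && (h v \in S) by move=> S v; rewrite inE.
      rewrite !in_setU !Wm uj eqxx E !in_setX.
      have C1 : pi1 u \in A pi1 j \/ pi1 u \in X pi1 by rewrite -uj; exact: pi_cover.
      have C2 : pi2 u \in A pi2 j \/ pi2 u \in X pi2 by rewrite -uj; exact: pi_cover.
      by case: C1 => ->; case: C2 => ->; rewrite ?andTb ?andbT ?orbT.
    have c1 : #|W S1| <= #|A pi1 j| * #|A pi2 j| by rewrite -cardsX; exact: card_pre.
    have c2 : #|W S2| <= #|A pi1 j| * #|X pi2| by rewrite -cardsX; exact: card_pre.
    have c3 : #|W S3| <= #|X pi1| * #|A pi2 j| by rewrite -cardsX; exact: card_pre.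
    have u1 := cardU_le (W S1 :|: W S2 :|: W S3) (W S4).
    have u2 := cardU_le (W S1 :|: W S2) (W S3).
    have u3 := cardU_le (W S1) (W S2).
    have s := subset_leq_card sub.
    have nj : n j <= #|[set u : parts_vtx n | tag u == j]| by apply: n_le.
    rewrite /aa; cbv beta.
    apply: leq_trans nj _; apply: leq_trans s _; apply: leq_trans u1 _.
    apply: leq_add; last done.
    apply: leq_trans u2 _; apply: leq_add; last by rewrite mulnC.
    apply: leq_trans u3 _; exact: leq_add.
  + rewrite sum_part; apply: leq_trans (card_pre hi predT S4) _.
    by rewrite cardsX.
- move=> [a [b [z [x [y [[hA [hAi hAe]] [hB [hBi hBe]] Hn Hz]]]]]].
  exists (hK hA hB Hn Hz); split; [exact: hK_inj | exact: hK_adj].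
Qed.
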